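(* Let $\mu$ be a $\sigma$-finite positive measure on $(\Omega,\mathcal B)$, written as $\mu=\mu_c+\mu_a$ where $\mu_c$ has no atoms and $\mu_a$ is purely atomic (so $\mu_c$ is the restriction of $\mu$ to the complement $C$ of the union of the atoms of $\mu$). Let $\nu$ be a $\sigma$-finite signed measure on $(\Omega,\mathcal B)$ satisfying condition $(\mathcal L)$ with respect to $\mu$. Then $\frac{d\nu}{d\mu_c}$ is constant, i.e. the restriction of $\nu$ to $C$ has Radon–Nikodym derivative with respect to $\mu_c$ which is $\mu_c$-a.e. equal to a constant.
   Context: A $\sigma$-finite signed measure is a countably additive extended-real-valued set function vanishing on $\emptyset$, taking at most one of the values $\pm\infty$, with $\sigma$-finite total variation. An atom of $\mu$ is a set $A\in\mathcal B$ with $\mu(A)>0$ such that every measurable $B\subset A$ has $\mu(B)\in\{0,\mu(A)\}$. $\nu$ satisfies $(\mathcal L)$ with respect to $\mu$ if for all $A,B\in\mathcal B$ with $\mu(A)=\mu(B)\neq\pm\infty$ one has $\nu(A)=\nu(B)\neq\pm\infty$. *)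

(* Defs.v *)
From mathcomp Require Import all_boot all_order all_algebra.
From mathcomp Require Import all_classical all_reals all_analysis.
Set Implicit Arguments. Unset Strict Implicit. Unset Printing Implicit Defensive.
Import Order.TTheory GRing.Theory Num.Theory.
Local Open Scope classical_set_scope.
Local Open Scope ring_scope.
Local Open Scope ereal_scope.

Definition is_atom d (T : measurableType d) (R : realType)
  (m : set T -> \bar R) (A : set T) : Prop :=
  [/\ measurable A, 0 < m A &
      forall B, measurable B -> B `<=` A -> m B = 0 \/ m B = m A].

Definition total_variation d (T : measurableType d) (R : realType)
  (nu : set T -> \bar R) (F : set T) : \bar R :=
  ereal_sup [set s | exists (n : nat) (B : nat -> set T),
     [/\ forall i, measurable (B i),
         forall i, B i `<=` F,
         trivIset `I_n B &
         s = \sum_(0 <= i < n) `| nu (B i) |]].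

Definition sigma_finite_signed_measure d (T : measurableType d) (R : realType)
  (nu : set T -> \bar R) : Prop :=
  [/\ nu set0 = 0,
      semi_sigma_additive nu,
      (forall A, measurable A -> nu A <> +oo) \/
      (forall A, measurable A -> nu A <> -oo) &
      sigma_finite setT (total_variation nu)].

Definition condition_L d (T : measurableType d) (R : realType)
  (mu nu : set T -> \bar R) : Prop :=
  forall A B, measurable A -> measurable B ->
    mu A = mu B -> mu A \is a fin_num ->
    nu A = nu B /\ nu A \is a fin_num.

(* Main.v *)
Require Import Defs.
From HB Require Import structures.
From mathcomp Require Import all_boot all_order all_algebra.
From mathcomp Require Import all_classical all_reals all_analysis.
From mathcomp Require Import lra.
Import Order.TTheory GRing.Theory Num.Theory.
Local Open Scope classical_set_scope.
Local Open Scope ring_scope.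
Local Open Scope ereal_scope.

Section lam_charge.
Context d (T : measurableType d) (R : realType) (mu : {measure set T -> \bar R})
  (nu : set T -> \bar R) (B : set T) (a : R).
Variables (hL : condition_L mu nu) (h0 : nu set0 = 0) (hs : semi_sigma_additive nu)
  (mB : measurable B) (fB : mu B < +oo).

Definition lam (hL' : condition_L mu nu) (h0' : nu set0 = 0)
  (hs' : semi_sigma_additive nu) (mB' : measurable B) (fB' : mu B < +oo) :
  set T -> \bar R := fun S => nu (S `&` B) - a%:E * mu (S `&` B).

Let lam0 : lam hL h0 hs mB fB set0 = 0.
Proof. by rewrite /lam set0I h0 measure0 mule0 subee. Qed.

Let muIB S : measurable S -> mu (S `&` B) \is a fin_num.
Proof.
move=> mS; rewrite ge0_fin_numE //; apply: le_lt_trans fB.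
apply: le_measure; [by rewrite inE; exact: measurableI | by rewrite inE | exact: subIsetr].
Qed.

Let nuIB S : measurable S -> nu (S `&` B) \is a fin_num.
Proof.
move=> mS; have mSB : measurable (S `&` B) by exact: measurableI.
by have [] := hL _ _ mSB mSB erefl (muIB _ mS).
Qed.

Let lam_fin S : measurable S -> lam hL h0 hs mB fB S \is a fin_num.
Proof. by move=> mS; rewrite /lam fin_numB nuIB //=; apply: fin_numM => //; exact: muIB. Qed.

Let lam_sigma : semi_sigma_additive (lam hL h0 hs mB fB).
Proof.
move=> F mF tF mUF; rewrite /lam.
have mG i : measurable (F i `&` B) by exact: measurableI.
have tG : trivIset setT (fun i => F i `&` B) by exact: trivIset_setIr.
have mUG : measurable (\bigcup_n (F n `&` B)) by rewrite -setI_bigcupl; exact: measurableI.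
have c1 := hs _ mG tG mUG.
have c2 := @measure_semi_sigma_additive _ _ _ mu _ mG tG mUG.
rewrite setI_bigcupl.
have -> : (fun n => \sum_(0 <= i < n) (nu (F i `&` B) - a%:E * mu (F i `&` B))) =
   (fun n => \sum_(0 <= i < n) nu (F i `&` B) - a%:E * \sum_(0 <= i < n) mu (F i `&` B)).
  apply/funext => n; rewrite big_split /= fin_num_sumeN; last first.
    by move=> i _; apply: fin_numM => //; exact: muIB.
  by rewrite ge0_sume_distrr.
apply: cvgeB; last exact: cvgeZl.
  rewrite fin_num_adde_defl // fin_numN fin_numM //.
  by rewrite -setI_bigcupl muIB.
exact: c1.
Qed.

HB.instance Definition _ := isCharge.Build _ _ _ (lam hL h0 hs mB fB)
  lam0 lam_fin lam_sigma.

End lam_charge.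

Section atomless.
Context d (T : measurableType d) (R : realType) (mu : {measure set T -> \bar R}) (C : set T).
Hypothesis mC : measurable C.
Hypothesis Hna : forall A, ~ is_atom (fun B => mu (B `&` C)) A.

Lemma fin_sub A X : measurable A -> measurable X -> X `<=` A -> mu A < +oo ->
  mu X = (fine (mu X))%:E.
Proof.
move=> mA mX XA Af; rewrite fineK // ge0_fin_numE //.
exact: le_lt_trans (le_measure _ (mem_set mX) (mem_set mA) XA) Af.
Qed.

Lemma split_set A : measurable A -> A `<=` C -> 0 < mu A ->
  exists B, [/\ measurable B, B `<=` A, 0 < mu B & mu B < mu A].
Proof.
move=> mA AC mu0.
have AIC : A `&` C = A by apply/setIidl.
have := Hna A; rewrite /is_atom => H; apply: contrapT => nE; apply: H.
split => //; first by rewrite AIC.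
move=> B mB BA; have BIC : B `&` C = B by apply/setIidl; apply: subset_trans BA AC.
rewrite BIC AIC.
apply: contrapT => /not_orP [B0 BA'].
apply: nE; exists B; split => //.
- by rewrite lt0e measure_ge0 andbT; apply/eqP.
- rewrite lt_neqAle; apply/andP; split; first exact/eqP.
  exact: le_measure (mem_set mB) (mem_set mA) BA.
Qed.

Lemma small_set A : measurable A -> A `<=` C -> 0 < mu A -> mu A < +oo ->
  forall e : R, (0 < e)%R ->
  exists B, [/\ measurable B, B `<=` A, 0 < mu B & mu B < e%:E].
Proof.
move=> mA AC A0 Af e e0.
have H : forall n, exists B, [/\ measurable B, B `<=` A, 0 < mu B &
   ((2 ^+ n)%:E * mu B <= mu A)].
  elim=> [|n [B [mB BA B0 hB]]].
    by exists A; split => //; rewrite expr0 mul1e.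
  have [B1 [mB1 B1B B10 B1lt]] := split_set _ mB (subset_trans BA AC) B0.
  have mB2 : measurable (B `\` B1) by exact: measurableD.
  have eB : mu B = mu B1 + mu (B `\` B1).
    rewrite -measureU //; first by rewrite setDUK.
    by rewrite setDIK.
  have B1A : B1 `<=` A by apply: subset_trans B1B BA.
  have B2A : B `\` B1 `<=` A by move=> x [/BA].
  move: eB B0 B1lt B10 hB.
  rewrite (fin_sub _ _ mA mB BA Af) (fin_sub _ _ mA mB1 B1A Af) (fin_sub _ _ mA mB2 B2A Af)
    (fin_sub _ _ mA mA (@subset_refl _ A) Af).
  rewrite -EFinD -EFinM !lte_fin !lee_fin => -[eB] B0 B1lt B10 hB.
  have p0 : (0 < 2 ^+ n :> R)%R by apply: exprn_gt0.
  have -> : (2 ^+ n.+1 = 2 * 2 ^+ n :> R)%R by rewrite exprS.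
  case: (lerP (fine (mu B1)) (fine (mu (B `\` B1)))) => h.
    exists B1; split => //; first by rewrite (fin_sub _ _ mA mB1 B1A Af) lte_fin.
    rewrite (fin_sub _ _ mA mB1 B1A Af) -EFinM lee_fin; nra.
  exists (B `\` B1); split => //; first by rewrite (fin_sub _ _ mA mB2 B2A Af) lte_fin; lra.
  rewrite (fin_sub _ _ mA mB2 B2A Af) -EFinM lee_fin; nra.
set a := fine (mu A).
have a0 : (0 <= a / e)%R by rewrite divr_ge0 ?fine_ge0 ?measure_ge0 // ltW.
set n := Num.Def.archi_bound (a / e).
have hn : (a / e < 2 ^+ n)%R.
  apply: lt_trans (archi_boundP a0) _.
  by rewrite -natrX ltr_nat ltn_expl.
have [B [mB BA B0 hB]] := H n.
exists B; split => //.
have BA' := hB; move: B0 BA'.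
rewrite (fin_sub _ _ mA mB BA Af) (fin_sub _ _ mA mA (@subset_refl _ A) Af) -EFinM !lte_fin !lee_fin.
rewrite -/a => B0 hB'.
have ee : (a / e * e = a)%R by rewrite -mulrA mulVf ?mulr1 // gt_eqF.
have p0 : (0 < 2 ^+ n :> R)%R by apply: exprn_gt0.
nra.
Qed.


Lemma sierp A : measurable A -> A `<=` C -> mu A < +oo ->
  forall t : R, (0 <= t)%R -> t%:E <= mu A ->
  exists B, [/\ measurable B, B `<=` A & mu B = t%:E].
Proof.
move=> mA AC Af t t0 tA.
have finE X : measurable X -> X `<=` A -> mu X = (fine (mu X))%:E.
  by move=> mX XA; exact: fin_sub mA mX XA Af.
pose Q (E F : set T) := [/\ measurable F, F `<=` A `\` E & mu E + mu F <= t%:E].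
have step : forall E, exists F, mu E <= t%:E ->
    Q E F /\ forall G, Q E G -> mu G <= 2%:E * mu F.
  move=> E; case: (pselect (mu E <= t%:E)) => hE; last by exists set0.
  have Q0 : Q E set0 by split => //; rewrite measure0 adde0.
  pose S := [set x : R | exists G, Q E G /\ mu G = x%:E].
  have S0 : S 0%R by exists set0; rewrite measure0.
  have Sub : ubound S (fine (mu A)).
    move=> x [G [[mG GA _] eG]].
    have GA' : G `<=` A by move=> y /GA [].
    by rewrite -lee_fin -eG -finE //; exact: le_measure (mem_set mG) (mem_set mA) GA'.
  have hs : has_sup S by split; [exists 0%R | exists (fine (mu A))].
  have s0 : (0 <= sup S)%R by apply: sup_upper_bound.
  have hG G : Q E G -> mu G <= (sup S)%:E.
    move=> qG; have [mG GA _] := qG.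
    have GA' : G `<=` A by move=> y /GA [].
    rewrite finE // lee_fin; apply: sup_upper_bound => //.
    by exists G; split => //; rewrite -finE.
  case: (lerP (sup S) 0%R) => hS.
    exists set0 => _; split => // G /hG; rewrite measure0 mule0 => h.
    by apply: le_trans h _; rewrite lee_fin.
  have [x [G0 [qG0 eG0]] hx] := sup_adherent (eps := (sup S / 2)%R) (divr_gt0 hS (ltr0Sn _ 1)) hs.
  exists G0 => _; split => // G /hG h; apply: le_trans h _.
  rewrite eG0 -EFinM lee_fin; lra.
have [f hf] := choice step.
pose E := fix E n := if n is n'.+1 then E n' `|` f (E n') else set0.
have EP : forall n, [/\ measurable (E n), E n `<=` A & mu (E n) <= t%:E].
  elim => [|n [mE EA Et]].
    by split => //=; rewrite measure0 lee_fin.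
  have [[mF FA Ft] _] := hf _ Et.
  split; first exact: measurableU.
    by rewrite /= subUset; split => // y /FA [].
  rewrite /= measureU //; apply/seteqP; split => // y [Ey /FA [_]]; exact.
have Emu : forall n, mu (E n.+1) = mu (E n) + mu (f (E n)).
  move=> n; have [mE EA Et] := EP n; have [[mF FA Ft] _] := hf _ Et.
  rewrite /= measureU //; apply/seteqP; split => // y [Ey /FA [_]]; exact.
have Ehomo : {homo E : n m / (n <= m)%N >-> (n <= m)%O}.
  by apply/nondecreasing_seqP => n /=; rewrite subsetEset; apply: subsetUl.
pose U := \bigcup_n E n.
have mU : measurable U by apply: bigcupT_measurable => n; case: (EP n).
have UA : U `<=` A by apply: bigcup_sub => n _; case: (EP n).
have cU := @nondecreasing_cvg_mu _ _ _ mu _ (fun n => (let: And3 a _ _ := EP n in a)) mU Ehomo.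
have Ut : mu U <= t%:E.
  rewrite -(cvg_lim _ cU) //; apply: lime_le; first by apply/cvg_ex; eexists; exact: cU.
  by apply: nearW => n /=; case: (EP n).
exists U; split => //.
apply/eqP; rewrite eq_le Ut /= leNgt; apply/negP => Ult.
have mD : measurable (A `\` U) by exact: measurableD.
have DA : A `\` U `<=` A by move=> y [].
have eD : mu (A `\` U) = mu A - mu U.
  by rewrite measureD // setIidr.
move: eD Ult tA; rewrite (finE _ mD DA) (finE _ mU UA) (finE _ mA (@subset_refl _ A)).
rewrite -EFinB !lte_fin !lee_fin => -[eD] Ult tA.
have D0 : 0 < mu (A `\` U) by rewrite (finE _ mD DA) lte_fin; lra.
have Dfin : mu (A `\` U) < +oo by rewrite (finE _ mD DA) ltry.
have [G [mG GD G0 Ge]] := small_set _ mD (subset_trans DA AC) D0 Dfin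
  (t - fine (mu U))%R ltac:(lra).
have GA : G `<=` A by apply: subset_trans GD DA.
have qG : forall n, Q (E n) G.
  move=> n; have [mE EA Et] := EP n; split => //.
    by move=> y /GD [Ay nUy]; split => // Ey; apply: nUy; exists n.
  have EU : E n `<=` U by move=> y Ey; exists n.
  have h1 : mu (E n) <= mu U by apply: le_measure => //; apply: mem_set.
  move: h1; rewrite (finE _ mE EA) (finE _ mU UA) lee_fin => h1.
  move: Ge; rewrite (finE _ mG GA) lte_fin => Ge.
  rewrite (finE _ mE EA) (finE _ mG GA) -EFinD lee_fin.
  lra.
have key : forall n, (n%:R * fine (mu G) <= 2 * fine (mu (E n)))%R.
  elim => [|n IH]; first by rewrite mul0r mulr_ge0 // fine_ge0 // measure_ge0.
  have [mE EA Et] := EP n; have [[mF FA Ft] hF] := hf _ Et.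
  have FA' : f (E n) `<=` A by move=> y /FA [].
  have := hF _ (qG n); have := Emu n.
  rewrite (finE _ mG GA) (finE _ mF FA') (finE _ ((let: And3 a _ _ := EP n.+1 in a)) ((let: And3 _ a _ := EP n.+1 in a))).
  rewrite (finE _ mE EA) -EFinD -EFinM lee_fin => -[->] h.
  rewrite -natr1 /=; lra.
set g := fine (mu G).
have g0 : (0 < g)%R by rewrite -lte_fin -finE.
have a0 : (0 <= 2 * t / g)%R by rewrite divr_ge0 ?mulr_ge0 // ltW.
set n := Num.Def.archi_bound (2 * t / g).
have hn := archi_boundP a0.
have kn := key n; have [_ _ Et] := EP n.
move: Et; rewrite (finE _ (let: And3 a _ _ := EP n in a) (let: And3 _ a _ := EP n in a)) lee_fin => Et.
have h2 : (2 * t < n%:R * g)%R by rewrite -ltr_pdivrMr.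
move: kn Et h2 g0; rewrite -/g; move: (fine (mu (E n))) => x.
clear; lra.
Qed.


Local Open Scope charge_scope.

Lemma lin_on (nu : set T -> \bar R) (hL : condition_L mu nu) (h0 : nu set0 = 0)
  (hs : semi_sigma_additive nu) B (mB : measurable B) (BC : B `<=` C)
  (fB : mu B < +oo) : 0 < mu B ->
  forall S, measurable S -> S `<=` B ->
  nu S = (fine (nu B) / fine (mu B))%:E * mu S.
Proof.
move=> B0.
set a := (fine (nu B) / fine (mu B))%R.
pose lm := @lam _ _ _ mu nu B a hL h0 hs mB fB.
have [P [N [[mP Ppos] [mN Nneg] PN PN0]]] := Hahn_decomposition lm.
have muf S : measurable S -> S `<=` B -> mu S = (fine (mu S))%:E.
  by move=> mS SB; exact: fin_sub mB mS SB fB.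
have nuf S : measurable S -> S `<=` B -> nu S = (fine (nu S))%:E.
  move=> mS SB; rewrite fineK //.
  have [] := hL _ _ mS mS erefl; last by [].
  by rewrite muf.
have lamE S : measurable S -> S `<=` B -> lm S = nu S - a%:E * mu S.
  by move=> mS SB; rewrite /lm /lam setIidl.
have lam_eq S S' : measurable S -> measurable S' -> S `<=` B -> S' `<=` B ->
    mu S = mu S' -> lm S = lm S'.
  move=> mS mS' SB S'B e; rewrite !lamE // e.
  have fS : mu S \is a fin_num by rewrite (muf _ mS SB).
  by have [-> _] := hL _ _ mS mS' e fS.
have lB : lm B = 0.
  rewrite lamE // (nuf _ mB (@subset_refl _ B)) (muf _ mB (@subset_refl _ B)).
  rewrite -EFinM -EFinB /a; congr EFin.
  have : (fine (mu B) != 0)%R.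
    by rewrite gt_eqF // -lte_fin -muf.
  move=> h; rewrite -mulrA mulVf ?mulr1 ?subrr //.
have mP' : measurable (B `&` P) by exact: measurableI.
have mN' : measurable (B `&` N) by exact: measurableI.
have P'B : B `&` P `<=` B by exact: subIsetl.
have N'B : B `&` N `<=` B by exact: subIsetl.
have hsplit : lm B = lm (B `&` P) + lm (B `&` N) :=
  charge_partition lm mB mP mN PN PN0.
have lP : 0 <= lm (B `&` P) by apply: Ppos => //; exact: subIsetr.
have lN : lm (B `&` N) <= 0 by apply: Nneg => //; exact: subIsetr.
have fin' X : measurable X -> X `<=` B -> mu X < +oo.
  by move=> mX XB; rewrite (muf _ mX XB) ltry.
have [lP0 lN0] : lm (B `&` P) = 0 /\ lm (B `&` N) = 0.
  case: (leP (mu (B `&` P)) (mu (B `&` N))) => h.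
    have [S' [mS' S'N eS']] := sierp _ mN' (subset_trans N'B BC) (fin' _ mN' N'B)
      (fine (mu (B `&` P))) (fine_ge0 (measure_ge0 _ _)) ltac:(by rewrite -muf).
    have e1 : lm (B `&` P) = lm S'.
      apply: lam_eq => //; first exact: subset_trans S'N N'B.
      by rewrite eS' -muf.
    have : lm S' <= 0 by apply: Nneg => //; apply: subset_trans S'N _; exact: subIsetr.
    rewrite -e1 => h'.
    have lP0 : lm (B `&` P) = 0 by apply/eqP; rewrite eq_le h' lP.
    by split => //; move: hsplit; rewrite lB lP0 add0e.
  have [S' [mS' S'P eS']] := sierp _ mP' (subset_trans P'B BC) (fin' _ mP' P'B)
    (fine (mu (B `&` N))) (fine_ge0 (measure_ge0 _ _)) ltac:(by rewrite -muf // ltW).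
  have e1 : lm (B `&` N) = lm S'.
    apply: lam_eq => //; first exact: subset_trans S'P P'B.
    by rewrite eS' -muf.
  have : 0 <= lm S' by apply: Ppos => //; apply: subset_trans S'P _; exact: subIsetr.
  rewrite -e1 => h'.
  have lN0 : lm (B `&` N) = 0 by apply/eqP; rewrite eq_le h' lN.
  by split => //; move: hsplit; rewrite lB lN0 adde0.
move=> S mS SB.
have mSP : measurable (S `&` P) by exact: measurableI.
have mSN : measurable (S `&` N) by exact: measurableI.
have zP : lm (S `&` P) = 0.
  have : lm (B `&` P) = lm (B `&` P `\` (S `&` P)) + lm (B `&` P `&` (S `&` P)) :=
    chargeDI lm mP' mSP.
  have -> : B `&` P `&` (S `&` P) = S `&` P.
    by apply/setIidr => x [Sx Px]; split => //; apply: SB.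
  rewrite lP0 => /esym/eqP; rewrite padde_eq0.
  - by case/andP => _ /eqP.
  - apply: Ppos; [exact: measurableD | by move=> x [[]]].
  - by apply: Ppos => //; exact: subIsetr.
have zN : lm (S `&` N) = 0.
  have : lm (B `&` N) = lm (B `&` N `\` (S `&` N)) + lm (B `&` N `&` (S `&` N)) :=
    chargeDI lm mN' mSN.
  have -> : B `&` N `&` (S `&` N) = S `&` N.
    by apply/setIidr => x [Sx Nx]; split => //; apply: SB.
  rewrite lN0 => /esym/eqP; rewrite nadde_eq0.
  - by case/andP => _ /eqP.
  - apply: Nneg; [exact: measurableD | by move=> x [[]]].
  - by apply: Nneg => //; exact: subIsetr.
have : lm S = lm (S `&` P) + lm (S `&` N) := charge_partition lm mS mP mN PN PN0.
rewrite zP zN adde0 lamE // (nuf _ mS SB) (muf _ mS SB) -EFinM -EFinB => -[h].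
congr EFin; lra.
Qed.

End atomless.

Theorem proposition1p4 (d : measure_display) (T : measurableType d)
  (R : realType) (mu : {measure set T -> \bar R}) (nu : set T -> \bar R)
  (C : set T) :
  sigma_finite setT mu ->
  (* C measurable; mu_c := mu restricted to C has no atoms *)
  measurable C ->
  (forall A, ~ is_atom (fun B => mu (B `&` C)) A) ->
  (* mu_a := mu restricted to ~C is purely atomic: concentrated on a
     countable family of its atoms *)
  (exists (I : set nat) (At : nat -> set T),
     (forall n, I n -> is_atom (fun B => mu (B `&` ~` C)) (At n)) /\
     mu ((~` \bigcup_(n in I) At n) `&` ~` C) = 0) ->
  sigma_finite_signed_measure nu ->
  condition_L mu nu ->
  (* d(nu|_C)/d(mu_c) exists and is mu_c-a.e. equal to a constant *)
  exists (c : R) (f : T -> R),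
    [/\ measurable_fun setT f,
        (forall A, measurable A ->
           nu (A `&` C) = \int[mu]_(x in A `&` C) (f x)%:E) &
        {ae mu, forall x, C x -> f x = c}].
Proof.
move=> sfmu mC Hna _ [h0 hs _ _] hL.
have [c Hc] : exists c : R, forall S, measurable S -> S `<=` C -> mu S < +oo ->
    nu S = c%:E * mu S.
  case: (pselect (exists B0, [/\ measurable B0, B0 `<=` C, 0 < mu B0 & mu B0 < +oo])).
    move=> [B0 [mB0 B0C B00 B0f]].
    exists (fine (nu B0) / fine (mu B0))%R => S mS SC Sf.
    have mB : measurable (S `|` B0) by exact: measurableU.
    have BC : S `|` B0 `<=` C by rewrite subUset.
    have fB : mu (S `|` B0) < +oo.
      apply: le_lt_trans (measureU2 _ mS mB0) _.
      by rewrite lte_add_pinfty.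
    have Bpos : 0 < mu (S `|` B0).
      apply: lt_le_trans B00 _; apply: le_measure; rewrite ?inE //; exact: subsetUr.
    have L := @lin_on _ _ _ _ _ Hna _ hL h0 hs _ mB BC fB Bpos.
    have e0 := L B0 mB0 (@subsetUr _ S B0).
    rewrite (L S mS (@subsetUl _ S B0)); congr (_ * _); congr EFin.
    have m0 : mu B0 = (fine (mu B0))%:E by rewrite fineK // ge0_fin_numE.
    rewrite e0 m0 -EFinM /= mulfK //.
    by rewrite gt_eqF // -lte_fin -m0.
  move=> hno; exists 0%R => S mS SC Sf.
  have S0 : mu S = 0.
    apply/eqP; rewrite eq_le measure_ge0 andbT leNgt; apply/negP => S0.
    by apply: hno; exists S; split.
  rewrite mul0e -h0.
  have [-> _] := hL _ _ mS measurable0 ltac:(by rewrite S0 measure0) ltac:(by rewrite S0).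
  by [].
exists c, (fun _ => c); split.
- exact: measurable_cst.
- move=> A mA; rewrite integral_cst; last exact: measurableI.
  have [F FT Ff] := sfmu.
  set X := A `&` C.
  have mX : measurable X by exact: measurableI.
  pose G i := X `&` seqDU F i.
  have mF i : measurable (F i) by case: (Ff i).
  have mG i : measurable (G i) by apply: measurableI => //; exact: seqDU_measurable.
  have tG : trivIset setT G by exact: trivIset_setIl (trivIset_seqDU F).
  have UG : \bigcup_i G i = X.
    by rewrite /G -setI_bigcupr -seqDU_bigcup_eq -FT setIT.
  have mUG : measurable (\bigcup_i G i) by rewrite UG.
  have c1 := hs _ mG tG mUG.
  have c2 := @measure_semi_sigma_additive _ _ _ mu _ mG tG mUG.
  have Gf i : mu (G i) < +oo.
    apply: le_lt_trans (proj2 (Ff i)); apply: le_measure; rewrite ?inE //.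
    by move=> x [_ h]; exact: subset_seqDU h.
  have e : (fun n => \sum_(0 <= i < n) nu (G i)) =
           (fun n => c%:E * \sum_(0 <= i < n) mu (G i)).
    apply/funext => n; rewrite ge0_sume_distrr //; apply: eq_bigr => i _.
    by apply: Hc => //; move=> x [[_ Cx] _].
  rewrite e in c1.
  have c3 := cvgeZl (y := c%:E) (fin_numE _) c2.
  rewrite -UG; exact: (cvg_unique _ c1 c3).
- by apply: aeW.
Qed.
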